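(* Let $\mathcal X_1,\mathcal X_2$ each be either $(0,1)$ or $(0,1)^\infty$, let $\mu_1,\mu_2$ be probability measures on $\mathcal X_1,\mathcal X_2$ respectively, and let $B\subset\mathcal X_1\times\mathcal X_2$ be a Borel set. Assume that $S_{\mu_1-\nu_1,\mu_2-\nu_2}(B)=S_{\mu_1,\mu_2}(B)-\nu(B)$ for every positive measure $\nu$ on $B$ whose marginals $\nu_1,\nu_2$ satisfy $\nu_1\le\mu_1$ and $\nu_2\le\mu_2$. Then the supremum $S_{\mu_1,\mu_2}(B)$ is attained: there is a probability measure $\mu$ on $\mathcal X_1\times\mathcal X_2$ with marginals $\mu_1,\mu_2$ and $\mu(B)=S_{\mu_1,\mu_2}(B)$.
   Context: For finite positive measures $\lambda_1,\lambda_2$ on $\mathcal X_1,\mathcal X_2$ with $\lambda_1(\mathcal X_1)=\lambda_2(\mathcal X_2)$, and a Borel set $B\subset\mathcal X_1\times\mathcal X_2$, define $S_{\lambda_1,\lambda_2}(B)$ as the supremum of $\lambda(B)$ over all positive measures $\lambda$ on $\mathcal X_1\times\mathcal X_2$ with marginals $\lambda_1,\lambda_2$. *)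

(* Defs.v *)
From HB Require Import structures.
From mathcomp Require Import all_boot all_order all_algebra.
From mathcomp Require Import all_classical all_reals all_analysis.
Set Implicit Arguments. Unset Strict Implicit. Unset Printing Implicit Defensive.
Import Order.TTheory GRing.Theory Num.Theory.
Local Open Scope classical_set_scope.
Local Open Scope ring_scope.

Definition oi (R : realType) := {x : R | 0 < x < 1}.
HB.instance Definition _ (R : realType) := [Choice of oi R by <:].
Lemma half_oi (R : realType) : (0 < 2^-1 :> R) && (2^-1 < 1 :> R).
Proof. by rewrite invr_gt0 ltr0n /= invf_lt1 // ltr1n. Qed.
HB.instance Definition _ (R : realType) :=
  isPointed.Build (oi R) (exist _ 2^-1 (half_oi R)).

(* (0,1) with the Borel sigma-algebra (trace of the Borel sets of R). *)
Definition oi_gen (R : realType) : set (set (oi R)) :=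
  preimage_set_system setT (@sval R (fun x : R => 0 < x < 1)) (measurable : set (set R)).
Definition I01 (R : realType) := g_sigma_algebraType (@oi_gen R).
Definition I01_disp (R : realType) := sigma_display (@oi_gen R).

(* (0,1)^infinity = sequences in (0,1), with the product sigma-algebra
   (generated by the measurable cylinders {f | f n \in A}); this is its
   Borel sigma-algebra for the product topology. *)
Definition oiseq (R : realType) := nat -> I01 R.
Definition cyl_gen (R : realType) : set (set (oiseq R)) :=
  fun S => exists n (A : set (I01 R)), measurable A /\ S = (fun f => f n) @^-1` A.
Definition I01inf (R : realType) := g_sigma_algebraType (@cyl_gen R).
Definition I01inf_disp (R : realType) := sigma_display (@cyl_gen R).

Definition Xdisp (R : realType) (b : bool) : measure_display :=
  if b then I01_disp R else I01inf_disp R.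
Definition Xsp (R : realType) (b : bool) : measurableType (Xdisp R b) :=
  match b return measurableType (Xdisp R b) with
  | true => I01 R
  | false => I01inf R
  end.

Local Open Scope ereal_scope.

Definition has_marginals d1 d2 (X1 : measurableType d1) (X2 : measurableType d2)
  (R : realType) (lam : set (X1 * X2) -> \bar R)
  (l1 : set X1 -> \bar R) (l2 : set X2 -> \bar R) : Prop :=
  (forall A : set X1, measurable A -> lam (A `*` setT) = l1 A) /\
  (forall A : set X2, measurable A -> lam (setT `*` A) = l2 A).

Definition Ssup d1 d2 (X1 : measurableType d1) (X2 : measurableType d2)
  (R : realType) (l1 : set X1 -> \bar R) (l2 : set X2 -> \bar R)
  (B : set (X1 * X2)) : \bar R :=
  ereal_sup [set lam B | lam in
    [set lam : {measure set (X1 * X2) -> \bar R} | has_marginals lam l1 l2]].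

(* Main.v *)
Require Import Defs.
From HB Require Import structures.
From mathcomp Require Import all_boot all_order all_algebra.
From mathcomp Require Import all_classical all_reals all_analysis.
From mathcomp Require Import lra.
Import Order.TTheory GRing.Theory Num.Theory.
Local Open Scope classical_set_scope.
Local Open Scope ereal_scope.

Lemma archi_inv {R : realType} (e : R) : (0 < e)%R -> exists n : nat, ((n.+1%:R)^-1 < e)%R.
Proof.
move=> e0; have e0' : (0 <= e^-1)%R by rewrite invr_ge0 ltW.
have := archi_boundP e0'.
set n := Num.Def.archi_bound _ => h; exists n.
rewrite -(invrK e) ltf_pV2 ?posrE ?invr_gt0 ?ltr0n //.
by apply: (lt_trans h); rewrite ltr_nat.
Qed.

Lemma fin_lt_sub {R : realType} (x : \bar R) (e : R) :
  x \is a fin_num -> (0 < e)%R -> x - e%:E < x.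
Proof. by move=> /fineK <- e0; rewrite -EFinB lte_fin; lra. Qed.

Lemma fin_le {R : realType} (x y : \bar R) : 0 <= x -> x <= y -> y \is a fin_num -> x \is a fin_num.
Proof. by move=> x0 xy /fineK yE; rewrite ge0_fin_numE // (le_lt_trans xy) // -yE ltry. Qed.

Section S.
Context d1 d2 (X1 : measurableType d1) (X2 : measurableType d2) (R : realType).
Local Notation T := (X1 * X2)%type.
Variables (mu1 : probability X1 R) (mu2 : probability X2 R).
Variables (B : set T) (mB : measurable B).

Definition good (nu : measure T R) (n : nat) (lam : measure T R) :=
  has_marginals lam (fun A => mu1 A - nu (A `*` setT)) (fun A => mu2 A - nu (setT `*` A)) /\
  Ssup (fun A => mu1 A - nu (A `*` setT)) (fun A => mu2 A - nu (setT `*` A)) B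
    - ((n.+1%:R)^-1)%:E < lam B.

Definition pick (nu : measure T R) (n : nat) : measure T R :=
  match pselect (exists lam, good nu n lam) with
  | left h => projT1 (cid h)
  | right _ => mzero
  end.

Lemma pickP {nu : measure T R} {n : nat} : (exists lam, good nu n lam) -> good nu n (pick nu n).
Proof. by rewrite /pick; case: pselect => // h _; case: (cid h). Qed.

Fixpoint nus (n : nat) : measure T R :=
  match n with
  | 0 => mzero
  | k.+1 => measure_add (nus k) (mrestr (pick (nus k) k) mB)
  end.

Definition lamk k : measure T R := mrestr (pick (nus k) k) mB.

Definition nuinf : measure T R := mseries lamk 0.

Lemma nusE n A : nus n A = \sum_(0 <= k < n) lamk k A.
Proof.
elim: n => [|n IH]; first by rewrite big_geq.
have -> : nus n.+1 A = nus n A + lamk n A by exact: measure_addE.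
by rewrite IH big_nat_recr.
Qed.


Local Notation Sup := (Ssup mu1 mu2 B).

Definition Hyp := forall nu : measure T R,
     nu (~` B) = 0 ->
     (forall A, measurable A -> nu (A `*` setT) <= mu1 A) ->
     (forall A, measurable A -> nu (setT `*` A) <= mu2 A) ->
     Ssup (fun A => mu1 A - nu (A `*` setT)) (fun A => mu2 A - nu (setT `*` A)) B
       = Ssup mu1 mu2 B - nu B.

Definition Inv (nu : measure T R) : Prop := [/\ nu (~` B) = 0,
  (forall A, measurable A -> nu (A `*` setT) <= mu1 A) &
  (forall A, measurable A -> nu (setT `*` A) <= mu2 A)].

Lemma Sup_le1 : Sup <= 1.
Proof.
apply: ge_ereal_sup => _ [lam [h1 h2] <-].
rewrite -(probability_setT mu1) -(h1 _ measurableT).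
by apply: le_measure; rewrite ?inE //; apply: measurableX.
Qed.

Lemma Sup_ge0 : 0 <= Sup.
Proof.
apply: (le_trans _ (ereal_sup_ubound _)); last first.
  exists (mu1 \x mu2 : measure T R); last reflexivity.
  split => A mA /=; rewrite product_measure1E //.
  - by rewrite -[RHS]mule1; congr (_ * _); exact: probability_setT.
  - by rewrite -[RHS]mul1e; congr (_ * _); exact: probability_setT.
exact: measure_ge0.
Qed.

Lemma Sup_fin : Sup \is a fin_num.
Proof. by rewrite ge0_fin_numE ?Sup_ge0 // (le_lt_trans Sup_le1) // ltey. Qed.

Lemma Inv_le1 nu : Inv nu -> forall C, measurable C -> 0 <= nu C <= 1.
Proof.
move=> [_ h1 _] C mC; rewrite measure_ge0 /=.
rewrite -(probability_setT mu1); apply: le_trans (h1 _ measurableT).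
by apply: le_measure; rewrite ?inE //; apply: measurableX.
Qed.

Lemma Inv_fin {nu : measure T R} : Inv nu -> forall C, measurable C -> nu C \is a fin_num.
Proof.
move=> h C mC; have /andP[h0 h1] := @Inv_le1 nu h C mC.
by rewrite ge0_fin_numE // (le_lt_trans h1) // ltey.
Qed.


Lemma eps_gt0 n : (0 < (n.+1%:R)^-1 :> R)%R.
Proof. by rewrite invr_gt0 ltr0n. Qed.

Lemma step (H : Hyp) n : Inv (nus n) ->
  Inv (nus n.+1) /\ Sup - ((n.+1%:R)^-1)%:E < nus n.+1 B.
Proof.
move=> hI; have [h0 h1 h2] := hI.
have HS := H _ h0 h1 h2.
have fS := Sup_fin; have fB := Inv_fin hI _ mB.
have mT : measurable (@setT T) by [].
have ex : exists lam, good (nus n) n lam.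
  have sfin : Ssup (fun A => mu1 A - nus n (A `*` setT))
      (fun A => mu2 A - nus n (setT `*` A)) B \is a fin_num.
    by rewrite HS fin_numB fS fB.
  have /ereal_sup_gt[_ [lam hl <-] hlt] := @fin_lt_sub _ _ _ sfin (eps_gt0 n).
  by exists lam.
have [[hm1 hm2] hlt] := pickP ex.
set p := pick (nus n) n in hm1 hm2 hlt *.
have nE C : nus n.+1 C = nus n C + p (C `&` B) by exact: measure_addE.
rewrite HS in hlt.
split; first split.
- by rewrite nE h0 add0e setICl measure0.
- move=> A mA; rewrite nE.
  have mAT : measurable (A `*` @setT X2) by apply: measurableX.
  apply: le_trans (leeD2l _ (_ : p (A `*` setT `&` B) <= p (A `*` setT))) _.
    by apply: le_measure; rewrite ?inE //; apply: measurableI.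
  by rewrite hm1 // addeC subeK //; exact: Inv_fin hI _ mAT.
- move=> A mA; rewrite nE.
  have mAT : measurable (@setT X1 `*` A) by apply: measurableX.
  apply: le_trans (leeD2l _ (_ : p (setT `*` A `&` B) <= p (setT `*` A))) _.
    by apply: le_measure; rewrite ?inE //; apply: measurableI.
  by rewrite hm2 // addeC subeK //; exact: Inv_fin hI _ mAT.
have mTT : measurable (@setT X1 `*` @setT X2) by apply: measurableX.
have fpB : p B \is a fin_num.
  have pBle : p B <= p (setT `*` setT) by apply: le_measure; rewrite ?inE.
  apply: (@fin_le _ _ _ (measure_ge0 p B) pBle).
  by rewrite hm1 // fin_numB fin_num_measure //= (Inv_fin hI _ mTT).
rewrite nE setIid.
move: hlt; rewrite -(fineK fS) -(fineK fB) -(fineK fpB).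
rewrite -!EFinB -EFinD !lte_fin; set e := (n.+1%:R^-1)%R; set a := fine _; set b := fine _; set c := fine _; lra.
Qed.

Lemma Inv_all (H : Hyp) n : Inv (nus n).
Proof.
elim: n => [|n IH]; last by case: (step H n IH).
by split => // A mA; exact: measure_ge0.
Qed.

Lemma nuinfE C : nuinf C = \sum_(0 <= k <oo) lamk k C.
Proof. by []. Qed.

Lemma nus_le_nuinf n C : nus n C <= nuinf C.
Proof.
rewrite nusE nuinfE; apply: nneseries_lim_ge => k _ _; exact: measure_ge0.
Qed.

Lemma nuinf_le C c : (forall n, nus n C <= c) -> nuinf C <= c.
Proof.
move=> h; rewrite nuinfE; apply: lime_le.
  by apply: is_cvg_nneseries => k _ _; exact: measure_ge0.
by apply: nearW => k; rewrite -nusE.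
Qed.

Lemma Inv_nuinf (H : Hyp) : Inv nuinf.
Proof.
split.
- apply: le_anti; rewrite measure_ge0 andbT; apply: nuinf_le => n.
  by have [-> _ _] := Inv_all H n.
- move=> A mA; apply: nuinf_le => n; by have [_ h _] := Inv_all H n; exact: h.
- move=> A mA; apply: nuinf_le => n; by have [_ _ h] := Inv_all H n; exact: h.
Qed.

Lemma nuinf_geS (H : Hyp) : Sup <= nuinf B.
Proof.
apply/lee_addgt0Pr => e e0.
have [n hn] := archi_inv _ e0.
have [_ h] := step H n (Inv_all H n).
have h2 := nus_le_nuinf n.+1 B.
have fS := Sup_fin.
have f1 := Inv_fin (Inv_all H n.+1) _ mB.
have f2 := Inv_fin (Inv_nuinf H) _ mB.
move: h h2; rewrite -(fineK fS) -(fineK f1) -(fineK f2) -EFinB -EFinD lte_fin !lee_fin.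
set a := fine _; set b := fine _; set c := fine _; set ee := (n.+1%:R^-1)%R in hn *.
lra.
Qed.

Lemma main (H : Hyp) : exists mu : probability T R,
    has_marginals mu mu1 mu2 /\ mu B = Sup.
Proof.
have hI := Inv_nuinf H; have [h0 h1 h2] := hI.
have HS := H _ h0 h1 h2.
have fB := Inv_fin hI _ mB.
have sfin : Ssup (fun A => mu1 A - nuinf (A `*` setT))
    (fun A => mu2 A - nuinf (setT `*` A)) B \is a fin_num.
  by rewrite HS fin_numB Sup_fin fB.
have : -oo < Ssup (fun A => mu1 A - nuinf (A `*` setT))
    (fun A => mu2 A - nuinf (setT `*` A)) B.
  by move: sfin; rewrite fin_numE => /andP[+ _]; rewrite ltNye.
move=> /ereal_sup_gt[_ [lam [hm1 hm2] _] _].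
pose mu0 := measure_add nuinf lam.
have mu0E C : mu0 C = nuinf C + lam C by exact: measure_addE.
have mTT : measurable (@setT X1 `*` @setT X2) by apply: measurableX.
have mu0T : mu0 setT = 1.
  rewrite mu0E -setXTT hm1 // addeC subeK; last exact: Inv_fin hI _ mTT.
  exact: probability_setT.
pose mu := mnormalize mu0 (mu1 \x mu2).
have muE C : mu C = mu0 C.
  rewrite /mu /mnormalize; case: ifPn => [/orP[]/eqP h|_].
  - have : (1 : \bar R) = 0 by rewrite -h; exact: esym mu0T.
    by move/eqP; rewrite onee_eq0.
  - have : (1 : \bar R) = +oo by rewrite -h; exact: esym mu0T.
    by [].
  rewrite (_ : fine _ = 1%R); first by rewrite invr1 mule1.
  by transitivity (fine (1 : \bar R)); [congr fine; exact: mu0T | by []].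
have marg : has_marginals mu mu1 mu2.
  split => A mA; (etransitivity; [exact: muE|]); rewrite mu0E.
  - rewrite hm1 // addeC subeK //; apply: Inv_fin hI _ _; exact: measurableX.
  - rewrite hm2 // addeC subeK //; apply: Inv_fin hI _ _; exact: measurableX.
exists mu; split => //; apply: le_anti; apply/andP; split.
  by apply: ereal_sup_ubound; exists mu.
apply: le_trans (nuinf_geS H) _.
apply: (@le_trans _ _ (mu0 B)); last by rewrite le_eqVlt; apply/orP; left; apply/eqP; exact: esym (muE B).
rewrite mu0E.
exact: leeDl (measure_ge0 _ _).
Qed.

End S.

Theorem lemma3p6 (R : realType) (b1 b2 : bool)
  (mu1 : probability (Xsp R b1) R) (mu2 : probability (Xsp R b2) R)
  (B : set (Xsp R b1 * Xsp R b2)) (mB : measurable B) :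
  (forall nu : measure (Xsp R b1 * Xsp R b2)%type R,
     nu (~` B) = 0 ->
     (forall A, measurable A -> nu (A `*` setT) <= mu1 A) ->
     (forall A, measurable A -> nu (setT `*` A) <= mu2 A) ->
     Ssup (fun A => mu1 A - nu (A `*` setT)) (fun A => mu2 A - nu (setT `*` A)) B
       = Ssup mu1 mu2 B - nu B) ->
  exists mu : probability (Xsp R b1 * Xsp R b2)%type R,
    has_marginals mu mu1 mu2 /\ mu B = Ssup mu1 mu2 B.
Proof.
move=> H; exact: (@main _ _ _ _ R mu1 mu2 B mB H).
Qed.
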